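(* For every instance $\mathcal{I}$ of the Square Strip Packing Problem, $h_{\text{BL}}^{\text{worst}}(\mathcal{I})\le 16\cdot h_{\text{OPT}}(\mathcal{I})$. In particular, the bottom-left algorithm has constant approximation ratio for the Square Strip Packing Problem.
   Context: Square Strip Packing Problem: squares with side lengths at most $W$ are to be packed without rotation into the strip $[0,W]\times[0,\infty)$ with pairwise disjoint interiors; the height of a packing is the maximum top coordinate of a square, and $h_{\text{OPT}}(\mathcal{I})$ is the minimum height of a feasible packing. Bottom-left algorithm: given an ordering, place the first square at $(0,0)$ and each subsequent square at a feasible position $(x,y)$ (lower-left corner) with $(y,x)$ lexicographically minimal. $h_{\text{BL}}^{\text{worst}}(\mathcal{I})$ is the maximum over all orderings of the height of the bottom-left packing. *)

(* Defs.v *)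
From HB Require Import structures.
From mathcomp Require Import all_boot all_order all_algebra all_fingroup.
From mathcomp Require Import reals.
Set Implicit Arguments. Unset Strict Implicit. Unset Printing Implicit Defensive.
Import Order.TTheory GRing.Theory Num.Theory.
Local Open Scope ring_scope.

(* An instance: n squares with side lengths s i, strip width W.
   A position is the lower-left corner (x, y). *)

Section SSP.
Variables (R : realType) (n : nat) (W : R) (s : 'I_n -> R).

Definition in_strip (i : 'I_n) (x y : R) : Prop :=
  0 <= x /\ x + s i <= W /\ 0 <= y.

Definition disj_int (i : 'I_n) (x y : R) (j : 'I_n) (x' y' : R) : Prop :=
  x + s i <= x' \/ x' + s j <= x \/ y + s i <= y' \/ y' + s j <= y.

Definition is_packing (p : 'I_n -> R * R) : Prop :=
  (forall i, in_strip i (p i).1 (p i).2) /\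
  (forall i j, i != j -> disj_int i (p i).1 (p i).2 j (p j).1 (p j).2).

Definition height (p : 'I_n -> R * R) : R :=
  \big[Num.max/0]_(i < n) ((p i).2 + s i).

Definition feasible_pos (p : 'I_n -> R * R) (A : 'I_n -> bool)
  (i : 'I_n) (x y : R) : Prop :=
  in_strip i x y /\ forall j, A j -> disj_int i x y j (p j).1 (p j).2.

Definition lex_le (x1 y1 x2 y2 : R) : Prop :=
  y1 < y2 \/ (y1 = y2 /\ x1 <= x2).

(* p is the bottom-left packing for the ordering sigma: the k-th square
   sigma k is placed at a feasible position (w.r.t. the squares
   sigma 0, ..., sigma (k-1)) whose (y,x) is lexicographically minimal.
   (For k = 0 this forces the position (0,0).) *)
Definition is_BL_packing (sigma : {perm 'I_n}) (p : 'I_n -> R * R) : Prop :=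
  forall k : 'I_n,
    let A := fun j : 'I_n => (perm.perm_inv sigma j < k)%N in
    feasible_pos p A (sigma k) (p (sigma k)).1 (p (sigma k)).2 /\
    forall x y, feasible_pos p A (sigma k) x y ->
      lex_le (p (sigma k)).1 (p (sigma k)).2 x y.

End SSP.

(* Main.v *)
Require Import Defs.
From HB Require Import structures.
From mathcomp Require Import all_boot all_order all_algebra all_fingroup.
From mathcomp Require Import reals.
From mathcomp Require Import ring lra.
From Stdlib Require Import Classical.
Import Order.TTheory GRing.Theory Num.Theory.
Local Open Scope ring_scope.

Definition clamp {R : realType} (c d z : R) : R := Num.max c (Num.min z d).
Definition len {R : realType} (l r c d : R) : R := clamp c d (Num.max l r) - clamp c d l.
Definition ind {R : realType} (l r w t : R) : R := if (l < t) && (t < r) then w else 0.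

Variant clamp_spec {R : realType} (c d z : R) : R -> Prop :=
 | ClampLo of z <= c : clamp_spec c d z c
 | ClampIn of c <= z & z <= d : clamp_spec c d z z
 | ClampHi of d <= z : clamp_spec c d z d.

Lemma clampP {R : realType} (c d z : R) : c <= d -> clamp_spec c d z (clamp c d z).
Proof.
move=> cd; rewrite /clamp.
case: (leP z d) => zd.
- case: (leP c z) => cz; first exact: ClampIn.
  by apply: ClampLo; apply: ltW.
- case: (leP c d) => cd'; first by apply: ClampHi; apply: ltW.
  lra.
Qed.

Lemma maxr_l {R : realType} (l r : R) : r <= l -> Num.max l r = l.
Proof. by move=> h; apply/max_idPl. Qed.
Lemma maxr_r {R : realType} (l r : R) : l <= r -> Num.max l r = r.
Proof. by move=> h; apply/max_idPr. Qed.
Arguments maxr_l {R l r} _.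
Arguments maxr_r {R l r} _.

Arguments clampP {R c d} z _.

Lemma clamp_split {R : realType} (c m d z : R) : c <= m -> m <= d ->
  clamp c d z = clamp c m z + clamp m d z - m.
Proof.
move=> cm md; have cd : c <= d by apply: le_trans md.
case: (clampP z cd) => ?; case: (clampP z cm) => ?; case: (clampP z md) => ?; lra.
Qed.

Lemma len_split {R : realType} (l r c m d : R) : c <= m -> m <= d ->
  len l r c d = len l r c m + len l r m d.
Proof.
move=> cm md; rewrite /len !(clamp_split _ _ _ _ cm md); lra.
Qed.
Arguments len_split {R} l r {c m d} _ _.

Lemma clamp_range {R : realType} (c d z : R) : c <= d -> c <= clamp c d z /\ clamp c d z <= d.
Proof. move=> cd; case: (clampP z cd) => *; lra. Qed.

Lemma clamp_mono {R : realType} (c d z z' : R) : c <= d -> z <= z' -> clamp c d z <= clamp c d z'.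
Proof. move=> cd zz; case: (clampP z cd) => ?; case: (clampP z' cd) => ?; lra. Qed.

Lemma clamp_lip {R : realType} (c d z z' : R) : c <= d -> z <= z' -> clamp c d z' - clamp c d z <= z' - z.
Proof. move=> cd zz; case: (clampP z cd) => ?; case: (clampP z' cd) => ?; lra. Qed.

Lemma len_ge0 {R : realType} (l r c d : R) : c <= d -> 0 <= len l r c d.
Proof.
move=> cd; rewrite /len subr_ge0; apply: clamp_mono => //.
by rewrite le_max lexx.
Qed.
Arguments len_ge0 {R} l r {c d} _.

Lemma len_le {R : realType} (l r c d : R) : c <= d -> l <= r -> len l r c d <= r - l.
Proof. move=> cd lr; rewrite /len maxr_r //; exact: clamp_lip. Qed.
Arguments len_le {R} l r {c d} _ _.

Lemma len_full {R : realType} (l r c d : R) : c <= l -> l <= r -> r <= d -> len l r c d = r - l.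
Proof.
move=> cl lr rd; have cd : c <= d by lra.
rewrite /len maxr_r //; case: (clampP r cd) => ?; case: (clampP l cd) => ?; lra.
Qed.

Lemma len_nil {R : realType} (l r c d : R) : r <= l -> len l r c d = 0.
Proof. by move=> rl; rewrite /len maxr_l // subrr. Qed.

Lemma len_below {R : realType} (l r c d : R) : c <= d -> r <= c -> len l r c d = 0.
Proof.
move=> cd rc; case: (leP r l) => ?; first exact: len_nil.
rewrite /len maxr_r; last lra.
case: (clampP r cd) => ?; case: (clampP l cd) => ?; lra.
Qed.

Lemma len_above {R : realType} (l r c d : R) : c <= d -> d <= l -> len l r c d = 0.
Proof.
move=> cd dl; case: (leP r l) => ?; first exact: len_nil.
rewrite /len maxr_r; last lra.
case: (clampP r cd) => ?; case: (clampP l cd) => ?; lra.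
Qed.

Lemma len_mono_d {R : realType} (l r c d d' : R) : c <= d -> d <= d' -> len l r c d <= len l r c d'.
Proof.
move=> cd dd; rewrite (len_split l r cd dd).
have := len_ge0 l r dd; lra.
Qed.

Lemma len_splitlr {R : realType} (l m r c d : R) : l <= m -> m <= r ->
  len l r c d = len l m c d + len m r c d.
Proof.
move=> lm mr; rewrite /len (maxr_r lm) (maxr_r mr) maxr_r; last lra.
ring.
Qed.

Lemma clamp_facts {R : realType} (l0 r0 c d : R) : c <= d -> l0 < r0 ->
  exists lp rp : R, [/\ c <= lp /\ lp <= rp /\ rp <= d, len l0 r0 c d = rp - lp,
   (forall t, c < t -> t < lp -> t <= l0),
   (forall t, lp < t -> t < rp -> l0 < t /\ t < r0) &
   (forall t, rp < t -> t < d -> r0 <= t)].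
Proof.
move=> cd lr; exists (clamp c d l0), (clamp c d r0).
rewrite /len maxr_r; last exact: ltW.
case: (clampP l0 cd) => ?; case: (clampP r0 cd) => ?; split; try lra;
  move=> t; lra.
Qed.

Lemma weighted_lb {R : realType} (T : Type) (s : seq T) (l r w : T -> R) (c d K : R) :
  c <= d -> (forall t, c < t -> t < d -> K <= \sum_(k <- s) ind (l k) (r k) (w k) t) ->
  K * (d - c) <= \sum_(k <- s) w k * len (l k) (r k) c d.
Proof.
elim: s c d K => [|k0 s IH] c d K cd H.
- rewrite big_nil. case: (ltrP c d) => cd'.
  + have h := H ((c+d)/2). rewrite big_nil in h.
    have : K <= 0 by apply: h; lra.
    move=> hK; rewrite mulr_le0_ge0 //; lra.
  + have -> : d - c = 0 by lra. by rewrite mulr0.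
- rewrite big_cons.
  set l0 := l k0; set r0 := r k0; set w0 := w k0.
  have Hs : forall t, c < t -> t < d -> K - ind l0 r0 w0 t <= \sum_(k <- s) ind (l k) (r k) (w k) t.
    by move=> t h1 h2; have := H t h1 h2; rewrite big_cons; lra.
  case: (leP r0 l0) => lr.
  + rewrite len_nil // mulr0 add0r. apply: IH => // t h1 h2.
    have := Hs t h1 h2. rewrite /ind. case: ifP => [/andP[??]|_]; lra.
  + have [lp [rp [[h1 [h2 h3]] -> F1 F2 F3]]] := clamp_facts _ _ _ _ cd lr.
    have IH1 := IH c lp K h1.
    have IH2 := IH lp rp (K - w0) h2.
    have IH3 := IH rp d K h3.
    have e : \sum_(k <- s) w k * len (l k) (r k) c d =
      \sum_(k <- s) w k * len (l k) (r k) c lp + \sum_(k <- s) w k * len (l k) (r k) lp rp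
      + \sum_(k <- s) w k * len (l k) (r k) rp d.
      rewrite -!big_split /=; apply: eq_bigr => k _.
      rewrite (len_split _ _ h1 (le_trans h2 h3)) (len_split _ _ h2 h3); ring.
    rewrite e.
    have A1 : K * (lp - c) <= \sum_(k <- s) w k * len (l k) (r k) c lp.
      apply: IH1 => t t1 t2. have := Hs t t1 (lt_le_trans t2 (le_trans h2 h3)).
      have := F1 t t1 t2.
      rewrite /ind; case: ifP => [/andP[u1 u2]|_]; lra.
    have A2 : (K - w0) * (rp - lp) <= \sum_(k <- s) w k * len (l k) (r k) lp rp.
      apply: IH2 => t t1 t2. have := Hs t (le_lt_trans h1 t1) (lt_le_trans t2 h3).
      have [u1 u2] := F2 t t1 t2.
      by rewrite /ind u1 u2.
    have A3 : K * (d - rp) <= \sum_(k <- s) w k * len (l k) (r k) rp d.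
      apply: IH3 => t t1 t2. have := Hs t (le_lt_trans (le_trans h1 h2) t1) t2.
      have := F3 t t1 t2.
      rewrite /ind; case: ifP => [/andP[u1 u2]|_]; lra.
    have -> : K * (d - c) = K * (lp - c) + (K - w0) * (rp - lp) + K * (d - rp) + w0 * (rp - lp) by ring.
    rewrite [w0 * _ + _]addrC; apply: lerD => //; apply: lerD => //; exact: lerD.
Qed.


Lemma weighted_ub {R : realType} (T : Type) (s : seq T) (l r w : T -> R) (c d K : R) :
  c <= d -> (forall t, c < t -> t < d -> \sum_(k <- s) ind (l k) (r k) (w k) t <= K) ->
  \sum_(k <- s) w k * len (l k) (r k) c d <= K * (d - c).
Proof.
move=> cd H.
have := @weighted_lb _ _ s l r (fun k => - w k) c d (-K) cd.
rewrite (eq_bigr (fun k => - (w k * len (l k) (r k) c d))); last by move=> k _; rewrite mulNr.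
rewrite sumrN mulNr => h.
suff : - (K * (d - c)) <= - \sum_(k <- s) w k * len (l k) (r k) c d by lra.
apply: h => t t1 t2.
rewrite (eq_bigr (fun k => - ind (l k) (r k) (w k) t)); last first.
  by move=> k _; rewrite /ind; case: ifP => _ //; rewrite oppr0.
rewrite sumrN; have := H t t1 t2; lra.
Qed.

Lemma weighted_lb_fin {R : realType} (n : nat) (l r w : 'I_n -> R) (c d K : R) :
  c <= d -> (forall t, c < t -> t < d -> K <= \sum_(k < n) ind (l k) (r k) (w k) t) ->
  K * (d - c) <= \sum_(k < n) w k * len (l k) (r k) c d.
Proof. exact: (weighted_lb _ (index_enum 'I_n)). Qed.

Lemma weighted_ub_fin {R : realType} (n : nat) (l r w : 'I_n -> R) (c d K : R) :
  c <= d -> (forall t, c < t -> t < d -> \sum_(k < n) ind (l k) (r k) (w k) t <= K) ->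
  \sum_(k < n) w k * len (l k) (r k) c d <= K * (d - c).
Proof. exact: (weighted_ub _ (index_enum 'I_n)). Qed.

Lemma sum_ge_term {R : realType} (T : finType) (F : T -> R) (k0 : T) :
  (forall k, 0 <= F k) -> F k0 <= \sum_k F k.
Proof.
move=> h; rewrite (bigD1 k0) //=.
have : 0 <= \sum_(k | k != k0) F k by apply: sumr_ge0 => k _.
lra.
Qed.

Lemma sum_le1 {R : realType} (T : finType) (F : T -> R) :
  (forall k, 0 <= F k /\ F k <= 1) -> (forall k k', F k != 0 -> F k' != 0 -> k = k') ->
  \sum_k F k <= 1.
Proof.
move=> h1 h2.
case: (pickP (fun k => F k != 0)) => [k0 hk0|h0].
- rewrite (bigD1 k0) //= big1 ?addr0; first by case: (h1 k0).
  move=> k hk; apply/eqP; apply: contraNT hk => hk.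
  by apply/eqP; apply: h2.
- rewrite big1; first lra.
  by move=> k _; have := h0 k => /= /negbFE/eqP.
Qed.

Lemma ind_ge0 {R : realType} (l r w t : R) : 0 <= w -> 0 <= ind l r w t.
Proof. by move=> h; rewrite /ind; case: ifP. Qed.

Lemma ind_mul1 {R : realType} (l r w t : R) : ind l r w t = ind l r 1 t * w.
Proof. by rewrite /ind; case: ifP => _; rewrite ?mul1r ?mul0r. Qed.

Lemma height_ge {R : realType} (n : nat) (s : 'I_n -> R) (p : 'I_n -> R * R) i :
  (p i).2 + s i <= height s p.
Proof. rewrite /height; exact: (le_bigmax 0 (fun i => (p i).2 + s i) i). Qed.

Lemma height_ge0 {R : realType} (n : nat) (s : 'I_n -> R) (p : 'I_n -> R * R) :
  (forall i, 0 <= (p i).2 + s i) -> 0 <= height s p.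
Proof.
move=> h; rewrite /height; elim/big_ind: _ => //.
by move=> x y hx hy; rewrite le_max hx.
Qed.


Lemma opt_cross {R : realType} (n : nat) (W : R) (s : 'I_n -> R) (p : 'I_n -> R * R)
  (hW : 0 < W) (hs : forall i, 0 < s i /\ s i <= W) (Hp : is_packing W s p) (t : R) :
  \sum_(k < n) ind (p k).2 ((p k).2 + s k) (s k) t <= W.
Proof.
case: Hp => Hst Hdj.
set w := fun k => ind (p k).2 ((p k).2 + s k) 1 t.
have e : forall k : 'I_n, ind (p k).2 ((p k).2 + s k) (s k) t
   = w k * len (p k).1 ((p k).1 + s k) 0 W.
  move=> k; have [h1 [h2 h3]] := Hst k; have [hs1 hs2] := hs k.
  rewrite len_full; [|lra|lra|lra].
  rewrite /w ind_mul1; ring.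
rewrite (eq_bigr _ (fun k _ => e k)).
have := @weighted_ub_fin R n (fun k => (p k).1) (fun k => (p k).1 + s k) w 0 W 1 (ltW hW).
rewrite mul1r subr0; apply => u u1 u2.
apply: sum_le1.
- move=> k; rewrite /w /ind; (repeat case: ifP => _); split; lra.
- move=> k k'; rewrite /w /ind.
  case: ifP => [/andP[a1 a2]|]; last by rewrite eqxx.
  case: ifP => [/andP[a3 a4]|]; last by rewrite eqxx.
  move=> _.
  case: ifP => [/andP[a5 a6]|]; last by rewrite eqxx.
  case: ifP => [/andP[a7 a8]|]; last by rewrite eqxx.
  move=> _.
  apply/eqP; apply: contraT => hne.
  have := Hdj k k' hne; rewrite /disj_int.
  move=> [h|[h|[h|h]]]; lra.
Qed.

Lemma opt_area {R : realType} (n : nat) (W : R) (s : 'I_n -> R) (p : 'I_n -> R * R)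
  (hW : 0 < W) (hs : forall i, 0 < s i /\ s i <= W) (Hp : is_packing W s p) :
  \sum_(k < n) s k * s k <= W * height s p.
Proof.
have H0 : 0 <= height s p.
  apply: height_ge0 => i; have [_ [_ ?]] := Hp.1 i; have := hs i; case; lra.
have := @weighted_ub_fin R n (fun k => (p k).2) (fun k => (p k).2 + s k) s 0 (height s p) W H0.
rewrite subr0 => h.
have <- : \sum_(k < n) s k * len (p k).2 ((p k).2 + s k) 0 (height s p) = \sum_(k < n) s k * s k.
  apply: eq_bigr => k _; rewrite len_full.
  - congr (_ * _); ring.
  - by have [_ [_ ?]] := Hp.1 k.
  - have := hs k; case; lra.
  - exact: height_ge.
apply: h => t _ _; exact: opt_cross.
Qed.

Lemma bl_strip {R : realType} (n : nat) (W : R) (s : 'I_n -> R) (sigma : {perm 'I_n})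
  (p : 'I_n -> R * R) (HBL : is_BL_packing W s sigma p) i :
  in_strip W s i (p i).1 (p i).2.
Proof.
have := HBL (perm.perm_inv sigma i) => /=; rewrite perm.permKV.
by case=> -[].
Qed.

Lemma bl_block {R : realType} (n : nat) (W : R) (s : 'I_n -> R) (sigma : {perm 'I_n})
  (p : 'I_n -> R * R) (HBL : is_BL_packing W s sigma p) i (x t : R) :
  0 <= x -> x + s i <= W -> 0 <= t -> t < (p i).2 ->
  exists j, [/\ (p j).1 < x + s i, x < (p j).1 + s j, (p j).2 < t + s i & t < (p j).2 + s j].
Proof.
move=> h1 h2 h3 h4.
have := HBL (perm.perm_inv sigma i) => /=; rewrite perm.permKV => -[_ Hmin].
apply: NNPP => hn.
have : lex_le (p i).1 (p i).2 x t.
  apply: Hmin; split; first by rewrite /in_strip; lra.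
  move=> j _; rewrite /disj_int.
  case: (leP (x + s i) (p j).1) => a1; first by left.
  case: (leP ((p j).1 + s j) x) => a2; first by right; left.
  case: (leP (t + s i) (p j).2) => a3; first by right; right; left.
  case: (leP ((p j).2 + s j) t) => a4; first by right; right; right.
  by exfalso; apply: hn; exists j; split.
rewrite /lex_le; case=> [h|[h _]]; lra.
Qed.
Arguments bl_block {R n W s sigma p} HBL i x t _ _ _ _.
Arguments bl_strip {R n W s sigma p} HBL i.


Definition area {R : realType} {n : nat} (s : 'I_n -> R) (p : 'I_n -> R * R) (c d : R) : R :=
  \sum_(k < n) s k * len (p k).2 ((p k).2 + s k) c d.

Lemma area_split {R : realType} {n} (s : 'I_n -> R) p (c m d : R) : c <= m -> m <= d ->
  area s p c d = area s p c m + area s p m d.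
Proof.
move=> cm md; rewrite /area -big_split /=; apply: eq_bigr => k _.
by rewrite (len_split _ _ cm md) mulrDr.
Qed.

Lemma area_ge0 {R : realType} {n} (s : 'I_n -> R) p (c d : R) :
  (forall i, 0 < s i) -> c <= d -> 0 <= area s p c d.
Proof.
move=> hs cd; apply: sumr_ge0 => k _; apply: mulr_ge0; first exact: ltW.
exact: len_ge0.
Qed.

Lemma area_mono {R : realType} {n} (s : 'I_n -> R) p (c d d' : R) :
  (forall i, 0 < s i) -> c <= d -> d <= d' -> area s p c d <= area s p c d'.
Proof.
move=> hs cd dd; rewrite (area_split s p c d d' cd dd).
have := area_ge0 s p d d' hs dd; lra.
Qed.

Lemma area_le_total {R : realType} {n} (s : 'I_n -> R) p (d : R) :
  (forall i, 0 < s i) -> 0 <= d -> area s p 0 d <= \sum_(k < n) s k * s k.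
Proof.
move=> hs d0; apply: ler_sum => k _; apply: ler_wpM2l; first exact: ltW.
have := len_le ((p k).2) ((p k).2 + s k) d0; have := hs k; move=> h1 h2.
have := h2 ltac:(lra); lra.
Qed.

Lemma ineq52 {R : realType} (yk sk b tl y : R) : 0 < b -> 2/3 * b <= sk -> tl <= y - b ->
  len (yk - b) (yk + sk) tl (y - b) <= 5/2 * len yk (yk + sk) tl y.
Proof.
move=> b0 hsk htl.
have c2 : tl <= y by lra.
rewrite (len_splitlr (yk - b) yk (yk + sk)); [|lra|lra].
have h1 : len yk (yk + sk) tl (y - b) <= len yk (yk + sk) tl y by apply: len_mono_d; lra.
have h0 : 0 <= len yk (yk + sk) tl y by apply: len_ge0.
suff h2 : len (yk - b) yk tl (y - b) <= 3/2 * len yk (yk + sk) tl y by lra.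
case: (leP y yk) => hy.
  rewrite len_above; lra.
case: (leP yk tl) => ht.
  rewrite len_below; lra.
have L1 : len (yk - b) yk tl (y - b) <= b.
  have := len_le (yk - b) yk htl; lra.
have L2 : len (yk - b) yk tl (y - b) <= y - yk.
  rewrite /len maxr_r; last lra.
  case: (clampP yk htl) => ?; case: (clampP (yk - b) htl) => ?; lra.
case: (leP (yk + sk) y) => hys.
  rewrite (len_full yk (yk + sk) tl y); lra.
have -> : len yk (yk + sk) tl y = y - yk.
  rewrite /len maxr_r; last lra.
  case: (clampP (yk + sk) c2) => ?; case: (clampP yk c2) => ?; lra.
lra.
Qed.


Lemma bl_range {R : realType} (n : nat) (W : R) (s : 'I_n -> R) (sigma : {perm 'I_n})
  (p : 'I_n -> R * R) (hW : 0 < W) (hs : forall i, 0 < s i /\ s i <= W)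
  (HBL : is_BL_packing W s sigma p) (i : 'I_n) (tl : R) :
  0 <= tl ->
  (forall k, s k < 2/3 * s i -> (p k).2 < (p i).2 -> (p k).2 + s k <= tl) ->
  tl <= (p i).2 - s i ->
  W * ((p i).2 - s i - tl) <= 10 * area s p tl (p i).2.
Proof.
move=> tl0 tlsm htl.
set b := s i; set y := (p i).2.
have eb : b = s i := erefl. have ey : y = (p i).2 := erefl.
have b0 : 0 < b by case: (hs i).
have bW : b <= W by case: (hs i).
have s0 : forall k, 0 <= s k by move=> k; case: (hs k) => ? _; exact: ltW.
have big : forall k t, tl < t -> t < y - b -> (p k).2 - b < t -> t < (p k).2 + s k ->
    2/3 * b <= s k.
  move=> k t t1 t2 t3 t4; case: (leP (2/3 * b) (s k)) => // hk.
  have := tlsm k hk ltac:(rewrite /y; lra); lra.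
have Lb : forall t, tl < t -> t < y - b ->
    W / 4 <= \sum_(k < n) ind ((p k).2 - b) ((p k).2 + s k) (s k) t.
  move=> t t1 t2.
  set L := \sum_(k < n) _.
  have [j [hj1 hj2 hj3 hj4]] := bl_block HBL i 0 t (lexx 0) ltac:(rewrite /b in bW; lra) ltac:(lra) ltac:(rewrite /y in t2; lra).
  have sj : 2/3 * b <= s j by apply: (big j t) => //; rewrite /b; lra.
  have Lj : s j <= L.
    have := sum_ge_term _ (fun k => ind ((p k).2 - b) ((p k).2 + s k) (s k) t) j
      (fun k => ind_ge0 _ _ _ _ (s0 k)).
    rewrite /ind ifT //; apply/andP; split; rewrite /b; lra.
  have cov := @weighted_lb_fin R n (fun k => (p k).1 - b) (fun k => (p k).1 + s k)
     (fun k => ind ((p k).2 - b) ((p k).2 + s k) 1 t) 0 (W - b) 1 ltac:(lra).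
  have cov2 : 1 * (W - b - 0) <= \sum_(k < n) ind ((p k).2 - b) ((p k).2 + s k) 1 t *
      len ((p k).1 - b) ((p k).1 + s k) 0 (W - b).
    apply: cov => u u1 u2.
    have [k [hk1 hk2 hk3 hk4]] := bl_block HBL i u t ltac:(lra) ltac:(rewrite /b in u2; lra) ltac:(lra) ltac:(rewrite /y in t2; lra).
    have := sum_ge_term _ (fun k => ind ((p k).1 - b) ((p k).1 + s k)
        (ind ((p k).2 - b) ((p k).2 + s k) 1 t) u) k
      (fun k => ind_ge0 _ _ _ _ (ind_ge0 _ _ _ _ ler01)).
    rewrite /ind ifT; last by apply/andP; split; rewrite /b; lra.
    rewrite ifT //; apply/andP; split; rewrite /b; lra.
  have cov3 : \sum_(k < n) ind ((p k).2 - b) ((p k).2 + s k) 1 t *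
      len ((p k).1 - b) ((p k).1 + s k) 0 (W - b) <= 5/2 * L.
    rewrite /L mulr_sumr; apply: ler_sum => k _.
    rewrite /ind; case: ifP => [/andP[a1 a2]|_]; last by rewrite !mul0r mulr0.
    rewrite mul1r.
    have := big k t t1 t2 a1 a2.
    have := len_le ((p k).1 - b) ((p k).1 + s k) (c := 0) (d := W - b) ltac:(lra) ltac:(lra).
    lra.
  lra.
have main := @weighted_lb_fin R n (fun k => (p k).2 - b) (fun k => (p k).2 + s k) s tl (y - b) (W / 4) htl Lb.
have h2 : \sum_(k < n) s k * len ((p k).2 - b) ((p k).2 + s k) tl (y - b) <= 5/2 * area s p tl y.
  rewrite /area mulr_sumr; apply: ler_sum => k _.
  have l2 : 0 <= len (p k).2 ((p k).2 + s k) tl y.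
    apply: len_ge0. lra.
  case: (leP (2/3 * b) (s k)) => hk.
  - have h := @ineq52 R (p k).2 (s k) b tl y b0 hk htl.
    have := ler_wpM2l (s0 k) h.
    have -> : s k * (5 / 2 * len (p k).2 ((p k).2 + s k) tl y) =
       5 / 2 * (s k * len (p k).2 ((p k).2 + s k) tl y) by ring.
    done.
  - have -> : len ((p k).2 - b) ((p k).2 + s k) tl (y - b) = 0.
      case: (ltP (p k).2 y) => hy.
      + apply: len_below; first lra.
        exact: tlsm.
      + apply: len_above; lra.
    rewrite mulr0; apply: mulr_ge0; [lra | exact: mulr_ge0].
have -> : W * (y - b - tl) = 4 * (W / 4 * (y - b - tl)) by field.
lra.
Qed.


Lemma bl_claim {R : realType} (n : nat) (W : R) (s : 'I_n -> R) (sigma : {perm 'I_n})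
  (p : 'I_n -> R * R) (hW : 0 < W) (hs : forall i, 0 < s i /\ s i <= W)
  (HBL : is_BL_packing W s sigma p) (i : 'I_n) :
  W * ((p i).2 + s i) <= 10 * area s p 0 ((p i).2 + s i) + 6 * (W * s i).
Proof.
have s0 : forall k, 0 < s k by move=> k; case: (hs k).
suff H : forall m i, (#|[pred k | (s k < s i)%R]| < m)%N ->
    W * ((p i).2 + s i) <= 10 * area s p 0 ((p i).2 + s i) + 6 * (W * s i).
  exact: (H _ i (ltnSn _)).
elim=> [|m IH] {}i // hm.
have y0 : 0 <= (p i).2 by have [_ [_ ?]] := bl_strip HBL i.
have b0 := s0 i.
have [tl [tl0 [tlsm [tlIH tly]]]] : exists tl, 0 <= tl /\
   (forall k, s k < 2/3 * s i -> (p k).2 < (p i).2 -> (p k).2 + s k <= tl) /\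
   W * tl <= 10 * area s p 0 tl + 4 * (W * s i) /\ tl <= (p i).2 + s i.
  case: (pickP (fun k => (s k < 2/3 * s i) && ((p k).2 < (p i).2))) => [j0 hj0|hnone].
  - case: (@arg_maxP _ _ _ j0 [pred k | (s k < 2/3 * s i) && ((p k).2 < (p i).2)] (fun k => (p k).2 + s k) hj0) => j /andP[hj1 hj2] hjmax.
    exists ((p j).2 + s j).
    have yj0 : 0 <= (p j).2 by have [_ [_ ?]] := bl_strip HBL j.
    have sj0 := s0 j.
    split; first lra.
    split.
      move=> k hk1 hk2; apply: (hjmax k); apply/andP; split => //.
    split; last lra.
    have hc : (#|[pred k | (s k < s j)%R]| < m)%N.
      have : (#|[pred k | (s k < s j)%R]| < #|[pred k | (s k < s i)%R]|)%N.
        apply: proper_card; apply/properP; split.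
          by apply/subsetP => k; rewrite !inE => hk; apply: lt_trans hk _; lra.
        by exists j; rewrite !inE ?ltxx //; lra.
      move=> h; apply: leq_trans h _; exact: hm.
    have := IH j hc.
    have : W * s j <= W * (2/3 * s i) by apply: ler_wpM2l; lra.
    have -> : W * (2/3 * s i) = 2/3 * (W * s i) by ring.
    lra.
  - exists 0; split; first lra.
    split.
      by move=> k hk1 hk2; have := hnone k; rewrite hk1 hk2.
    split; last lra.
    rewrite mulr0; have := area_ge0 s p 0 0 s0 (lexx 0).
    have : 0 < W * s i by apply: mulr_gt0.
    lra.
case: (leP tl ((p i).2 - s i)) => htl.
- have hr := @bl_range R n W s sigma p hW hs HBL i tl tl0 tlsm htl.
  have e1 := area_split s p 0 tl (p i).2 tl0 ltac:(lra).
  have m1 := area_mono s p 0 (p i).2 ((p i).2 + s i) s0 y0 ltac:(lra).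
  have -> : W * ((p i).2 + s i) = W * tl + W * ((p i).2 - s i - tl) + 2 * (W * s i) by ring.
  lra.
- have h1 : W * ((p i).2 + s i) <= W * (tl + 2 * s i) by apply: ler_wpM2l; lra.
  have e2 : W * (tl + 2 * s i) = W * tl + 2 * (W * s i) by ring.
  have m2 := area_mono s p 0 tl ((p i).2 + s i) s0 tl0 tly.
  lra.
Qed.

Theorem corollary4 (R : realType) (n : nat) (W : R) (s : 'I_n -> R)
  (hW : 0 < W) (hs : forall i, 0 < s i /\ s i <= W)
  (sigma : {perm 'I_n}) (pBL pOPT : 'I_n -> R * R) :
  is_BL_packing W s sigma pBL ->
  is_packing W s pOPT ->
  height s pBL <= 16 * height s pOPT.
Proof.
move=> HBL HP.
have s0 : forall k, 0 < s k by move=> k; case: (hs k).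
set H := height s pOPT. have eH : H = height s pOPT := erefl.
have H0 : 0 <= H.
  apply: height_ge0 => i; have [_ [_ ?]] := HP.1 i; have := s0 i; lra.
have A := @opt_area R n W s pOPT hW hs HP. rewrite -/H in A.
rewrite /height; apply: bigmax_le; first lra.
move=> i _.
have C := @bl_claim R n W s sigma pBL hW hs HBL i.
have [_ [_ y0]] := bl_strip HBL i.
have sH : s i <= H.
  have := @height_ge R n s pOPT i; have [_ [_ ?]] := HP.1 i; rewrite -/H; lra.
have T := area_le_total s pBL ((pBL i).2 + s i) s0 ltac:(have := s0 i; lra).
have h1 : W * ((pBL i).2 + s i) <= W * (16 * H).
  have : 6 * (W * s i) <= 6 * (W * H) by rewrite ler_pM2l //; apply: ler_wpM2l; lra.
  have -> : W * (16 * H) = 10 * (W * H) + 6 * (W * H) by ring.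
  lra.
by rewrite -(ler_pM2l hW).
Qed.
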